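(* Let $S,M\subseteq X$ be disjoint, let $T\ge2$ be an even integer, and let $y=(y_0,y_1,\dots)$ be an infinite sequence in $X$ such that $y_0\in S$, $\mathrm{ct}\le T$, and $S_y[0,\mathrm{ht}]=1$. Set $r_S=T/2$. Then there exists $r_M\in R=\{1,2,4,\dots,2^{\lceil\log_2(14T)\rceil}\}$ such that, for $r=(r_S,r_M)$, \[ M_y^{(r)}[0,2T]\ge T/2\qquad\text{and}\qquad S_y^{(r)}[7T,15T]\ge T/4. \]
   Context: For a sequence $y$: $\mathrm{ht}=\min\{i\ge0:y_i\in M\}$ and $\mathrm{ct}=\min\{i>\mathrm{ht}:y_i\in S\}$. For positive integers $r=(r_S,r_M)$, $\gamma^{(r)}$ is the sequence obtained from $y$ by replacing each entry lying in $S$ by $r_S$ consecutive copies of it and each entry lying in $M$ by $r_M$ consecutive copies (other entries unchanged), indexed from $0$. For integers $a<b$, $M_y^{(r)}[a,b]=|\{t\in\{a,\dots,b\}:\gamma^{(r)}_t\in M\}|$ and $S_y^{(r)}[a,b]=|\{t\in\{a,\dots,b\}:\gamma^{(r)}_t\in S\}|$; when $r=(1,1)$ the superscript is omitted (so $\gamma^{(1,1)}=y$). *)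

(* Defs.v *)
From mathcomp Require Import all_boot.
Set Implicit Arguments. Unset Strict Implicit. Unset Printing Implicit Defensive.

Section Defs.
Variables (X : Type) (S M : pred X).

Definition is_ht (y : nat -> X) (h : nat) : Prop :=
  M (y h) /\ forall i, i < h -> ~~ M (y i).

Definition is_ct (y : nat -> X) (h c : nat) : Prop :=
  h < c /\ S (y c) /\ forall i, h < i -> i < c -> ~~ S (y i).

(* multiplicity of an entry: r_S if in S, r_M if in M, 1 otherwise *)
Definition wt (rS rM : nat) (x : X) : nat :=
  if S x then rS else if M x then rM else 1.

(* starting position in gamma^(r) of the block of copies of y_k *)
Definition blockpos (rS rM : nat) (y : nat -> X) (k : nat) : nat :=
  \sum_(j < k) wt rS rM (y j).

(* index k of y whose block contains position t (largest k with blockpos k <= t;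
   k <= t since all weights are >= 1 for positive rS, rM) *)
Definition gidx (rS rM : nat) (y : nat -> X) (t : nat) : nat :=
  \max_(k < t.+1 | blockpos rS rM y k <= t) (k : nat).

Definition gamma (rS rM : nat) (y : nat -> X) (t : nat) : X :=
  y (gidx rS rM y t).

Definition Mcount (rS rM : nat) (y : nat -> X) (a b : nat) : nat :=
  \sum_(a <= t < b.+1) (M (gamma rS rM y t) : nat).
Definition Scount (rS rM : nat) (y : nat -> X) (a b : nat) : nat :=
  \sum_(a <= t < b.+1) (S (gamma rS rM y t) : nat).

End Defs.

(* Main.v *)
Require Import Defs.
From mathcomp Require Import all_boot.
From mathcomp Require Import zify.

Section H.
Variables (X : Type) (S M : pred X) (rS rM : nat) (y : nat -> X).
Hypotheses (hS : 0 < rS) (hM : 0 < rM).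

Lemma wt_pos x : 0 < wt S M rS rM x.
Proof. by rewrite /wt; case: (S x) => //; case: (M x). Qed.

Lemma bpS k : blockpos S M rS rM y k.+1 = blockpos S M rS rM y k + wt S M rS rM (y k).
Proof. by rewrite /blockpos big_ord_recr. Qed.

Lemma bp_mono {i j} : i <= j -> blockpos S M rS rM y i <= blockpos S M rS rM y j.
Proof.
move=> /subnKC <-. elim: (j - i) => [|d IH]; first by rewrite addn0.
rewrite addnS bpS; exact: leq_trans IH (leq_addr _ _).
Qed.

Lemma bp_ge k : k <= blockpos S M rS rM y k.
Proof. elim: k => [|k IH] //; rewrite bpS -addn1; exact: leq_add IH (wt_pos _). Qed.

Lemma gidx_block k t : blockpos S M rS rM y k <= t < blockpos S M rS rM y k.+1 ->
  gidx S M rS rM y t = k.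
Proof.
case/andP=> h1 h2. apply/eqP; rewrite eqn_leq; apply/andP; split.
- apply/bigmax_leqP => i hi. rewrite leqNgt; apply/negP => ki.
  by move: (leq_trans (@bp_mono _ _ ki) hi); rewrite leqNgt h2.
- have kt : k < t.+1 by rewrite ltnS; exact: leq_trans (bp_ge k) h1.
  exact: (@leq_bigmax_cond _ _ _ (Ordinal kt)).
Qed.

Lemma gamma_block k t : blockpos S M rS rM y k <= t < blockpos S M rS rM y k.+1 ->
  gamma S M rS rM y t = y k.
Proof. by move=> H; rewrite /gamma (@gidx_block k t H). Qed.

Lemma sum_blocks (g : X -> nat) K :
  \sum_(0 <= t < blockpos S M rS rM y K) g (gamma S M rS rM y t) =
  \sum_(j < K) wt S M rS rM (y j) * g (y j).
Proof.
elim: K => [|K IH]; first by rewrite /blockpos !big_ord0 big_geq.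
rewrite big_ord_recr /= -IH (@big_cat_nat _ _ _ (blockpos S M rS rM y K)) //;
  last by apply: bp_mono.
congr (_ + _).
rewrite (@eq_big_nat _ _ _ _ _ _ (fun _ => g (y K))); last first.
  by move=> i hi; rewrite (@gamma_block K i).
by rewrite sum_nat_const_nat bpS addKn.
Qed.

End H.

Lemma sum_sub (F : nat -> nat) a b a' b' : a <= a' -> a' <= b' -> b' <= b ->
  \sum_(a' <= i < b') F i <= \sum_(a <= i < b) F i.
Proof.
move=> h1 h2 h3.
rewrite (@big_cat_nat _ _ _ a' a b) //; last exact: leq_trans h3.
rewrite (@big_cat_nat _ _ _ b' a' b) //.
exact: leq_trans (leq_addr _ _) (leq_addl _ _).
Qed.

Lemma gamma11 (X : Type) (S M : pred X) y t : gamma S M 1 1 y t = y t.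
Proof.
have bp : forall k, blockpos S M 1 1 y k = k.
  elim=> [|k IH]; first by rewrite /blockpos big_ord0.
  by rewrite bpS IH /wt; case: (S (y k)); case: (M (y k)); rewrite addn1.
by apply: (@gamma_block X S M 1 1 y isT isT t t); rewrite !bp leqnn ltnSn.
Qed.

Theorem mainTheorem9 (X : Type) (S M : pred X) (T : nat) (y : nat -> X) :
  (forall x, ~~ (S x && M x)) ->
  2 <= T -> ~~ odd T ->
  S (y 0) ->
  (exists h c, is_ht M y h /\ is_ct S y h c /\ c <= T /\
               Scount S M 1 1 y 0 h = 1) ->
  exists k, k <= up_log 2 (14 * T) /\
    let rS := T %/ 2 in let rM := 2 ^ k in
    T <= 2 * Mcount S M rS rM y 0 (2 * T) /\
    T <= 4 * Scount S M rS rM y (7 * T) (15 * T).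
Proof.
move=> disj T2 Tev Sy0 [h [c [[Mh notMlt] [[hc [Sc notSmid]] [cT Scnt]]]]].
set t := T %/ 2.
have Tt : T = 2 * t.
  by rewrite /t {1}(divn_eq T 2) modn2 (negbTE Tev) addn0 mulnC.
have t1 : 0 < t by lia.
have SnM : forall x, S x -> ~~ M x by move=> x Sx; move: (disj x); rewrite Sx.
have h0 : 0 < h.
  case: h Mh {notMlt hc notSmid Scnt} => // Mh; by move: (SnM _ Sy0); rewrite Mh.
have notS : forall j, 0 < j -> j < c -> ~~ S (y j).
  move=> j j0 jc; case: (leqP j h) => jh; last exact: notSmid.
  move: Scnt; rewrite /Scount (@big_ltn _ _ _ 0) // gamma11 Sy0 add1n => /eqP.
  rewrite eqSS => /eqP Hr.
  have := @sum_sub (fun i => S (gamma S M 1 1 y i)) 1 h.+1 j j.+1 j0 (leqnSn _) jh.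
  by rewrite Hr big_nat1 gamma11; case: (S (y j)).
have c1 : 0 < c by lia.
have [c' ec] : exists c', c = c'.+1 by exists c.-1; lia.
subst c.
have wtle : forall rM j, 0 < j -> j < c'.+1 -> wt S M t rM (y j) <= maxn 1 rM.
  move=> rM j j0 jc; rewrite /wt (negbTE (notS j j0 jc)).
  by case: (M _); rewrite ?leq_maxl ?leq_maxr.
set Q := fun k => blockpos S M t (2 ^ k) y c'.+1.
have Qle : forall k, Q k <= t + c' * 2 ^ k.
  move=> k; rewrite /Q /blockpos.
  rewrite big_ord_recl /= {1}/wt Sy0 leq_add2l.
  have -> : c' * 2 ^ k = \sum_(j < c') 2 ^ k by rewrite sum_nat_const card_ord.
  apply: leq_sum => j _.
  have := wtle (2 ^ k) (bump 0 j) (ltn0Sn _) (ltn_ord _).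
  by rewrite (maxn_idPr (expn_gt0 2 k)).
have Q0 : Q 0 < 7 * T by have := Qle 0; rewrite expn0 muln1; lia.
have Qdbl : forall k, Q k.+1 <= 2 * Q k.
  move=> k; rewrite /Q /blockpos big_distrr /=; apply: leq_sum => j _.
  rewrite /wt; case: (S _); first by lia.
  by case: (M _) => //; rewrite expnS.
have Qge : forall k, 2 ^ k <= Q k.
  move=> k; rewrite /Q /blockpos (bigD1 (Ordinal hc : 'I_c'.+1)) //= {1}/wt.
  have : S (y h) = false by apply/negP => Sh; move: (SnM _ Sh); rewrite Mh.
  by move=> ->; rewrite Mh leq_addr.
have exk : exists k, 7 * T <= Q k.
  exists (7 * T); apply: leq_trans (Qge _); exact: ltnW (ltn_expl _ (ltnSn 1)).
case: (ex_minnP exk) => k Pk kmin.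
case: k Pk kmin => [|k'] Pk kmin; first by move: Q0; rewrite ltnNge Pk.
have Qk' : Q k' < 7 * T.
  rewrite ltnNge; apply/negP => H; move: (kmin _ H); by rewrite ltnn.
have Qk : Q k'.+1 < 14 * T by have := Qdbl k'; lia.
have pk : 2 ^ k'.+1 < 14 * T.
  have := Qge k'; rewrite expnS; lia.
exists k'.+1; split.
  rewrite leqNgt; apply/negP => H.
  have := up_logP (14 * T) (ltnSn 1).
  have : 2 ^ up_log 2 (14 * T) <= 2 ^ k'.+1 by rewrite leq_exp2l //; exact: ltnW.
  lia.
move=> rS rM.
have rMpos : 0 < rM by rewrite expn_gt0.
split.
-
  rewrite /Mcount.
  have Hsplit : \sum_(0 <= i < (2 * T).+1) (M (gamma S M rS rM y i) : nat) +
                \sum_(0 <= i < (2 * T).+1) (~~ M (gamma S M rS rM y i) : nat) = (2 * T).+1.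
    rewrite -big_split /= (eq_bigr (fun _ => 1)); first by rewrite sum_nat_const_nat subn0 muln1.
    by move=> i _; case: (M _).
  have Hnm : \sum_(0 <= i < (2 * T).+1) (~~ M (gamma S M rS rM y i) : nat) <= t + c'.
    apply: leq_trans (@sum_sub (fun i => ~~ M (gamma S M rS rM y i)) 0 (Q k'.+1) 0 _ _ _ _) _ => //.
      by lia.
    rewrite /Q (@sum_blocks _ _ _ _ _ _ t1 rMpos (fun x => ~~ M x)).
    rewrite big_ord_recl /= {1}/wt Sy0 (SnM _ Sy0) muln1 leq_add2l.
    apply: leq_trans (_ : _ <= \sum_(j < c') 1) _; last by rewrite sum1_card card_ord.
    apply: leq_sum => j _.
    have := notS (bump 0 j) (ltn0Sn _) (ltn_ord _).
    rewrite /wt => /negbTE ->; by case: (M (y (bump 0 j))); rewrite ?muln0.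
  lia.
-
  rewrite /Scount.
  have Hb : \sum_(Q k'.+1 <= i < Q k'.+1 + t) (S (gamma S M rS rM y i) : nat) = t.
    rewrite (@eq_big_nat _ _ _ _ _ _ (fun _ => 1)).
      by rewrite sum_nat_const_nat addKn muln1.
    move=> i hi; rewrite (@gamma_block _ _ _ _ _ _ t1 rMpos c'.+1) ?Sc //.
    by rewrite [X in _ < X]bpS /wt Sc.
  have := @sum_sub (fun i => S (gamma S M rS rM y i)) (7 * T) (15 * T).+1 (Q k'.+1) (Q k'.+1 + t).
  rewrite Hb; move=> H; have : t <= \sum_(7 * T <= i < (15 * T).+1) (S (gamma S M rS rM y i) : nat).
    apply: H; [exact: Pk | exact: leq_addr | lia].
  lia.
Qed.
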